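(* Let $k\ge 1$ and $r\ge 2$ be integers and let $d_1\ge d_2\ge\cdots\ge d_k$ be positive integers. Then for all sufficiently large $n$, $$ex^{lin}_r\Big(n,\bigcup_{i=1}^k S^+_{d_i}\Big)\le \max_{1\le i\le k}\left\{\Big(\frac{d_i-1}{r}+\frac{i-1}{r-1}\Big)(n-i+1)+\frac{\binom{i-1}{2}}{\binom{r}{2}}\right\}.$$ Moreover, this bound is sharp asymptotically.
   Context: An $r$-uniform hypergraph is linear if every two of its hyperedges share at most one vertex. For a linear $r$-uniform hypergraph $F$, $ex^{lin}_r(n,F)$ is the maximum number of hyperedges in an $n$-vertex $r$-uniform linear hypergraph containing no copy of $F$ as a subhypergraph. $S_\ell$ denotes the star $K_{1,\ell}$ with $\ell$ edges. For a graph $F$ and $r\ge 2$, the expansion $F^+$ is the $r$-uniform hypergraph obtained from $F$ by adding $r-2$ new vertices to each edge, all added vertices being distinct. $\bigcup_{i=1}^k S^+_{d_i}$ denotes the vertex-disjoint union of $S^+_{d_1},\dots,S^+_{d_k}$. *)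

(* Defs.v *)
From mathcomp Require Import all_boot all_order all_algebra.
Set Implicit Arguments. Unset Strict Implicit. Unset Printing Implicit Defensive.
Import Order.TTheory GRing.Theory Num.Theory.

Definition uniform (V : finType) (r : nat) (H : {set {set V}}) : bool :=
  [forall e in H, #|e| == r].

Definition linear (V : finType) (H : {set {set V}}) : bool :=
  [forall e in H, forall f in H, (e != f) ==> (#|e :&: f| <= 1)].

Definition contains_copy (V W : finType) (F : {set {set V}}) (H : {set {set W}}) : bool :=
  [exists f : {ffun V -> W}, injectiveb f && [forall e in F, (f @: e) \in H]].

Definition ex_lin (r n : nat) (V : finType) (F : {set {set V}}) : nat :=
  \max_(H : {set {set 'I_n}} | [&& uniform r H, linear H & ~~ contains_copy F H]) #|H|.

(* Vertex type of the disjoint union of expanded stars S^+_{d_i}, i < k: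
   component i has a center (None) and, for each of its d i edges j, the r-1
   non-center vertices (Some (j,t)), t < r-1 (the leaf plus r-2 new vertices). *)
Definition star_vert (k r : nat) (d : 'I_k -> nat) : finType :=
  {i : 'I_k & option ('I_(d i) * 'I_(r.-1))}.

Definition star_edge (k r : nat) (d : 'I_k -> nat) (i : 'I_k) (j : 'I_(d i))
  : {set star_vert r d} :=
  [set @Tagged _ i (fun i => option ('I_(d i) * 'I_(r.-1))) None] :|:
  [set @Tagged _ i (fun i => option ('I_(d i) * 'I_(r.-1))) (Some (j, t)) | t : 'I_(r.-1)].

Definition star_forest (k r : nat) (d : 'I_k -> nat) : {set {set star_vert r d}} :=
  [set star_edge r (tagged x) | x : {i : 'I_k & 'I_(d i)}].

Local Open Scope ring_scope.
(* The i-th term of the bound, with 0-based index i (paper index i+1):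
   ((d_{i+1}-1)/r + i/(r-1)) (n - i) + C(i,2)/C(r,2). *)
Definition star_term (k r n : nat) (d : 'I_k -> nat) (i : 'I_k) : rat :=
  (((d i).-1)%:R / r%:R + (i : nat)%:R / (r.-1)%:R) * (n%:R - (i : nat)%:R)
  + ('C(i, 2))%:R / ('C(r, 2))%:R.

(* max over i < k of star_term; the seed 0 is harmless since, for n >= k,
   every term is >= 0 and k >= 1 (both ensured in the theorem). *)
Definition star_bound (k r n : nat) (d : 'I_k -> nat) : rat :=
  \big[Num.max/0]_(i < k) star_term r n d i.

(* Main.v *)
Require Import Defs.
From mathcomp Require Import all_boot all_order all_algebra.
Import Order.TTheory GRing.Theory Num.Theory.
From mathcomp Require Import zify ring lra.


Lemma arith_low (r i0 b Q n M C A1 A2 : nat) :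
  2 <= r -> 0 < Q ->
  M = 2 * Q * (r * i0 + r.-1 * b) * (i0 + b) * r + (i0 + b) * r + 1 ->
  n - i0 < C.+1 * M -> C * M <= n - i0 ->
  C < A1.+1 * r.-1 -> C < A2.+1 * r ->
  Q * (r * i0 + r.-1 * b) * (i0 + M + r * M) + Q * (i0 * i0) + 2 <= n ->
  Q * (r.-1 * b * (n - i0) + r * i0 * (n - i0) + i0 * i0.-1) <=
  Q * (r * r.-1) * (i0 * A1 * (M - (i0 + b) * r) + b * A2 * (M - (i0 + b) * r)) + r * r.-1 * n.
Proof.
move=> r2 Q0 eM hC1 hC2 hA1 hA2 hn.
set c := i0 + b in eM *; set s := r * i0 + r.-1 * b in eM hn *.
set Mp := M - c * r.
have cM : c * r <= M by rewrite eM; move: (2 * Q * s * c * r) (c * r) => X Y; lia.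
have hMp : Mp + c * r = M by rewrite /Mp subnK.
have h1 : C - r <= r.-1 * A1.
  move: hA1; rewrite mulSn mulnC; move: (r.-1 * A1) => X; lia.
have h2 : C - r <= r * A2.
  move: hA2; rewrite mulSn mulnC; move: (r * A2) => X; lia.
have h3 : s * ((C - r) * Mp) <= r * r.-1 * (i0 * A1 * Mp + b * A2 * Mp).
  have b1 : r * i0 * ((C - r) * Mp) <= r * i0 * (r.-1 * A1 * Mp).
    by rewrite leq_mul2l leq_mul2r h1 !orbT.
  have b2 : r.-1 * b * ((C - r) * Mp) <= r.-1 * b * (r * A2 * Mp).
    by rewrite leq_mul2l leq_mul2r h2 !orbT.
  have e1 : r * i0 * (r.-1 * A1 * Mp) + r.-1 * b * (r * A2 * Mp) =
            r * r.-1 * (i0 * A1 * Mp + b * A2 * Mp) by ring.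
  rewrite -e1 /s mulnDl; exact: leq_add.
have h4 : C * M <= (C - r) * Mp + C * (c * r) + r * M.
  have hA : C * Mp <= (C - r) * Mp + r * Mp by rewrite -mulnDl leq_mul2r; apply/orP; right; lia.
  have hB : r * Mp <= r * M by rewrite leq_mul2l -hMp leq_addr orbT.
  have hC : C * M = C * Mp + C * (c * r) by rewrite -hMp mulnDr.
  rewrite hC; move: hA hB; move: (C * Mp) ((C - r) * Mp) (r * Mp) (r * M) (C * (c * r)) => X Y Z V U; lia.
have h5 : n.+1 <= C * M + M + i0.
  move: hC1; rewrite mulSn; move: (C * M) => X; lia.
have h6 : Q * s * (C * (c * r)) * 2 <= n.+1.
  have : C * (2 * Q * s * c * r) <= C * M by rewrite leq_mul2l eM -addnA leq_addr orbT.
  have -> : Q * s * (C * (c * r)) * 2 = C * (2 * Q * s * c * r) by ring.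
  move=> hh; apply: leq_trans hh _; apply: leq_trans hC2 _; apply: leq_trans (leq_subr _ _) _; exact: leqnSn.
have hT : r.-1 * b * (n - i0) + r * i0 * (n - i0) + i0 * i0.-1 <= s * n + i0 * i0.
  have t1 : r.-1 * b * (n - i0) <= r.-1 * b * n by rewrite leq_mul2l leq_subr orbT.
  have t2 : r * i0 * (n - i0) <= r * i0 * n by rewrite leq_mul2l leq_subr orbT.
  have t3 : i0 * i0.-1 <= i0 * i0 by rewrite leq_mul2l leq_pred orbT.
  have -> : s * n = r.-1 * b * n + r * i0 * n by rewrite /s; ring.
  move: t1 t2 t3; move: (r.-1 * b * (n - i0)) (r.-1 * b * n) (r * i0 * (n - i0)) (r * i0 * n)
     (i0 * i0.-1) (i0 * i0) => X1 X2 X3 X4 X5 X6; lia.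
have hQ := leq_mul2l Q (r.-1 * b * (n - i0) + r * i0 * (n - i0) + i0 * i0.-1) (s * n + i0 * i0).
rewrite hT orbT in hQ.
have hQ3 : Q * (s * ((C - r) * Mp)) <= Q * (r * r.-1) * (i0 * A1 * Mp + b * A2 * Mp).
  by rewrite -mulnA leq_mul2l h3 orbT.
have hQ4 : Q * s * (C * M) <= Q * s * ((C - r) * Mp) + Q * s * (C * (c * r)) + Q * s * (r * M).
  by rewrite -!mulnDr leq_mul2l h4 orbT.
have hQ5 : Q * s * n.+1 <= Q * s * (C * M) + Q * s * M + Q * s * i0.
  by rewrite -!mulnDr leq_mul2l h5 orbT.
have rr : 2 <= r * r.-1 by rewrite -[2]muln1; apply: leq_mul => //; lia.
have hr : 2 * n <= r * r.-1 * n by rewrite leq_mul2r rr orbT.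
have e2 : Q * s * (i0 + M + r * M) = Q * s * i0 + Q * s * M + Q * s * (r * M) by ring.
rewrite e2 in hn.
have e3 : Q * (s * n + i0 * i0) = Q * s * n + Q * (i0 * i0) by ring.
rewrite e3 in hQ.
have e4 : Q * (s * ((C - r) * Mp)) = Q * s * ((C - r) * Mp) by ring.
rewrite e4 in hQ3.
have e5 : Q * s * n.+1 = Q * s * n + Q * s by ring.
rewrite e5 in hQ5.
move: hQ hQ3 hQ4 hQ5 hn h6 hr.
move: (Q * (r.-1 * b * (n - i0) + r * i0 * (n - i0) + i0 * i0.-1)) => T.
move: (Q * (r * r.-1) * (i0 * A1 * Mp + b * A2 * Mp)) => G.
move: (Q * s * n) (Q * (i0 * i0)) (Q * s * ((C - r) * Mp)) (Q * s * (C * M))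
      (Q * s * (C * (c * r))) (Q * s * (r * M)) (Q * s * M) (Q * s * i0) (Q * s) (r * r.-1 * n)
  => X1 X2 X3 X4 X5 X6 X7 X8 X9 X10.
lia.
Qed.

Set Implicit Arguments. Unset Strict Implicit. Unset Printing Implicit Defensive.
Local Notation lin := Defs.linear.


Section Gen.
Variable W : finType.
Implicit Types (H : {set {set W}}) (A X : {set W}).

Definition degA H A v := #|[set e in H | (v \in e) && (e \subset A)]|.
Definition GA H A := [set e in H | e \subset A].

Lemma linP H : lin H -> forall e f u v, e \in H -> f \in H -> u != v ->
  u \in e -> v \in e -> u \in f -> v \in f -> e = f.
Proof.
move=> /forall_inP lin e f u v eH fH uv ue ve uf vf.
apply/eqP; apply/negPn/negP => nef.
have h2 := implyP ((forall_inP (lin e eH)) f fH) nef.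
have : [set u; v] \subset e :&: f.
  by apply/subsetP=> x; rewrite !inE => /orP[]/eqP->; rewrite ?ue ?uf ?ve ?vf.
move/subset_leq_card; rewrite cards2 uv => h1.
by have := leq_trans h1 h2.
Qed.

Lemma pair_le1 H u v : lin H -> u != v ->
  #|[set e in H | (u \in e) && (v \in e)]| <= 1.
Proof.
move=> lin uv; apply/card_le1_eqP => e f; rewrite !inE.
move=> /andP[eH /andP[ue ve]] /andP[fH /andP[uf vf]].
by have -> := linP lin eH fH uv ue ve uf vf.
Qed.

Lemma card_bigcup_le (I : finType) (P : pred I) (F : I -> {set W}) :
  #|\bigcup_(i | P i) F i| <= \sum_(i | P i) #|F i|.
Proof.
elim/big_rec2: _ => [|i B s Pi IH]; first by rewrite cards0.
rewrite cardsU; apply: leq_trans (leq_subr _ _) _; by rewrite leq_add2l.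
Qed.

End Gen.

Lemma double_count (I J : finType) (P : pred I) (Q : pred J) (R : I -> J -> bool) :
  \sum_(i | P i) #|[set j | Q j && R i j]| = \sum_(j | Q j) #|[set i | P i && R i j]|.
Proof.
have E (K L : finType) (P' : pred K) (R' : K -> L -> bool) l :
   #|[set i | P' i && R' i l]| = \sum_(i | P' i) (R' i l : nat).
  by rewrite -sum1dep_card big_mkcondr /=; apply: eq_bigr => i _; case: (R' i l).
rewrite (eq_bigr (fun i => \sum_(j | Q j) (R i j : nat))); last first.
  by move=> i _; rewrite (E _ _ Q (fun j i => R i j)).
rewrite exchange_big /=; apply: eq_bigr => j _; by rewrite E.
Qed.

Section Gen2.
Variable W : finType.
Implicit Types (H S : {set {set W}}) (A B X Z : {set W}).

Lemma sum_degA H A r : uniform r H -> r * #|GA H A| = \sum_(v in A) degA H A v.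
Proof.
move=> /forall_inP un.
have := double_count (fun v => v \in A) (fun e => e \in GA H A) (fun v e => v \in e).
have -> : \sum_(v in A) degA H A v =
   \sum_(v in A) #|[set e | (e \in GA H A) && (v \in e)]|.
  apply: eq_bigr => v vA; rewrite /degA; apply: eq_card => e; rewrite /GA !inE.
  by rewrite -andbA (andbC (e \subset A)).
move=> ->.
rewrite (eq_bigr (fun _ => r)); first by rewrite sum_nat_const mulnC.
move=> e; rewrite /GA inE => /andP[eH eA].
rewrite -(eqP (un e eH)); apply: eq_card => v; rewrite inE.
apply/andP/idP => [[]//| ve]; split => //; exact: (subsetP eA).
Qed.

Fixpoint pk H A (ds : seq nat) : Prop :=
  match ds with
  | [::] => True
  | d :: ds' => exists c (S : {set {set W}}), [/\ S \subset H, #|S| = d,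
       (forall e, e \in S -> (c \in e) && (e \subset A)) & pk H (A :\: cover S) ds']
  end.

Lemma pk_mono H ds A B : A \subset B -> pk H A ds -> pk H B ds.
Proof.
elim: ds A B => [//|d ds IH] A B AB [c [S [SH Sd Se Hr]]].
exists c, S; split => //.
  move=> e /Se /andP[-> eA] /=; exact: subset_trans eA AB.
apply: IH Hr; exact: setSD.
Qed.

Lemma cover_card r H S : uniform r H -> S \subset H -> #|cover S| <= r * #|S|.
Proof.
move=> /forall_inP un SH; rewrite /cover.
apply: leq_trans (card_bigcup_le _ _) _.
rewrite (eq_bigr (fun _ => r)); first by rewrite sum_nat_const mulnC.
move=> e eS.
exact: eqP (un e (subsetP SH e eS)).
Qed.

Lemma cover_sub S A : (forall e, e \in S -> e \subset A) -> cover S \subset A.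
Proof. by move=> h; apply/bigcupsP => e /h. Qed.

Lemma pk_supp r H ds A : uniform r H -> pk H A ds ->
  exists Z, [/\ Z \subset A, #|Z| <= r * sumn ds & pk H Z ds].
Proof.
move=> un; elim: ds A => [|d ds IH] A /=.
  by move=> _; exists set0; split; rewrite ?sub0set ?cards0.
case=> c [S [SH Sd Se Hr]].
have [Z [ZA Zc HZ]] := IH _ Hr.
have cA : cover S \subset A by apply: cover_sub => e /Se /andP[].
exists (cover S :|: Z); split.
- rewrite subUset cA /=; apply: subset_trans ZA _; exact: subsetDl.
- rewrite cardsU; apply: leq_trans (leq_subr _ _) _; rewrite /= mulnDr.
  apply: leq_add => //; rewrite -Sd; exact: cover_card un SH.
- exists c, S; split => //.
    move=> e eS; have /andP[-> _] := Se e eS.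
    by rewrite /= subsetU // /cover (bigcup_sup _ eS).
  apply: pk_mono HZ; apply/subsetP => x xZ.
  have := subsetP ZA x xZ; rewrite !inE => /andP[-> _]; by rewrite xZ orbT.
Qed.

Lemma pk_cat H ds1 ds2 (A1 A2 : {set W}) : [disjoint A1 & A2] -> pk H A1 ds1 -> pk H A2 ds2 ->
  pk H (A1 :|: A2) (ds1 ++ ds2).
Proof.
elim: ds1 A1 => [|d ds IH] A1 dis /=.
  by move=> _; apply: pk_mono; exact: subsetUr.
case=> c [S [SH Sd Se Hr]] h2.
have cA : cover S \subset A1 by apply: cover_sub => e /Se /andP[].
exists c, S; split => //.
  move=> e /Se /andP[-> eA] /=; apply: subset_trans eA _; exact: subsetUl.
apply: pk_mono (IH _ _ Hr h2); last first.
  apply: disjointWl dis; exact: subsetDl.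
apply/subsetP => x; rewrite !inE => /orP[/andP[-> ->]//|xA2].
rewrite xA2 orbT andbT; apply/negP => xc.
have := subsetP cA x xc => xA1.
by move: dis; rewrite disjoints_subset => /subsetP /(_ x xA1); rewrite inE xA2.
Qed.

Lemma exists_sub_card (T : finType) (B : {set T}) d : d <= #|B| ->
  exists Y : {set T}, Y \subset B /\ #|Y| = d.
Proof.
move=> dB; exists [set x in take d (enum B)]; split.
  by apply/subsetP => x; rewrite inE => /mem_take; rewrite mem_enum.
rewrite cardsE; have /card_uniqP -> := take_uniq d (enum_uniq (mem B)).
by rewrite size_takel // -cardE.
Qed.

Lemma degA_drop H A X v : lin H -> v \notin X ->
  degA H A v <= degA H (A :\: X) v + #|X|.
Proof.
move=> lin vX.
have sub : [set e in H | (v \in e) && (e \subset A)] \subset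
   [set e in H | (v \in e) && (e \subset A :\: X)] :|:
   \bigcup_(x in X) [set e in H | (v \in e) && (x \in e)].
  apply/subsetP => e; rewrite !inE => /andP[eH /andP[ve eA]].
  case: (boolP (e \subset A :\: X)) => [sb|]; first by apply/orP; left; apply/and3P.
  case/subsetPn => x xe; rewrite !inE (subsetP eA x xe) andbT negbK => xX.
  apply/orP; right; apply/bigcupP; exists x => //; by rewrite !inE eH ve xe.
rewrite /degA; apply: leq_trans (subset_leq_card sub) _.
rewrite cardsU; apply: leq_trans (leq_subr _ _) _; rewrite leq_add2l.
apply: leq_trans (card_bigcup_le _ _) _.
rewrite -sum1_card; apply: leq_sum => x xX; apply: pair_le1 => //.
by apply/negP => /eqP vx; move: vX; rewrite vx xX.
Qed.

End Gen2.

Section Gen3.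
Variable W : finType.
Implicit Types (H S : {set {set W}}) (A B X Z L : {set W}).

Lemma greedy r H : lin H -> uniform r H -> 0 < r ->
  forall ds (cs : seq W) A, size cs = size ds -> uniq cs -> {subset cs <= A} ->
  (forall c, c \in cs -> size cs + r * sumn ds <= degA H A c) -> pk H A ds.
Proof.
move=> lin un r0; elim=> [|d ds IH] cs A Hs ucs sub Hdeg /=; first done.
case: cs Hs ucs sub Hdeg => [//|c cs] /= [Hs] /andP[ncs ucs] sub Hdeg.
set X := [set x in cs].
have degc := Hdeg c (mem_head _ _).
have cX : c \notin X by rewrite inE.
have h1 := degA_drop A lin cX.
have hX : #|X| <= size cs by rewrite cardsE card_size.
have rd : d <= r * d by rewrite leq_pmull.
have dle : d <= degA H (A :\: X) c.
  move: degc; rewrite mulnDr => degc; lia.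
have [S [Ssub Sd]] := exists_sub_card dle.
have Se : forall e, e \in S -> [&& e \in H, c \in e & e \subset A :\: X].
  by move=> e /(subsetP Ssub); rewrite inE.
have SH : S \subset H by apply/subsetP => e /Se /and3P[].
have ncov : forall c', c' \in cs -> c' \notin cover S.
  move=> c' c'cs; apply/negP => /bigcupP [e eS c'e].
  have /and3P[_ _ eAX] := Se e eS.
  by have := subsetP eAX c' c'e; rewrite !inE c'cs.
exists c, S; split => //.
  move=> e /Se /and3P[_ -> eAX] /=; apply: subset_trans eAX _; exact: subsetDl.
apply: (IH cs) => //.
  move=> c' c'cs; rewrite inE ncov //=; apply: sub; by rewrite inE c'cs orbT.
move=> c' c'cs.
have h2 := degA_drop A lin (ncov c' c'cs).
have h3 := cover_card un SH; rewrite Sd in h3.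
have := Hdeg c'; rewrite inE c'cs orbT => /(_ isT) h4.
move: h4; rewrite mulnDr => h4; lia.
Qed.

Lemma GA_drop H A X D : (forall x, x \in X -> #|[set f in H | x \in f]| <= D) ->
  #|GA H A| <= #|GA H (A :\: X)| + #|X| * D.
Proof.
move=> Dx.
have sub : GA H A \subset GA H (A :\: X) :|: \bigcup_(x in X) [set f in H | x \in f].
  apply/subsetP => e; rewrite /GA !inE => /andP[eH eA].
  case: (boolP (e \subset A :\: X)) => [sb|]; first by apply/orP; left; apply/andP.
  case/subsetPn => x xe; rewrite !inE (subsetP eA x xe) andbT negbK => xX.
  apply/orP; right; apply/bigcupP; exists x => //; by rewrite !inE eH xe.
apply: leq_trans (subset_leq_card sub) _.
rewrite cardsU; apply: leq_trans (leq_subr _ _) _; rewrite leq_add2l.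
apply: leq_trans (card_bigcup_le _ _) _.
rewrite -sum_nat_const; exact: leq_sum.
Qed.

Lemma boundedB r H D : lin H -> uniform r H -> 0 < r ->
  forall ds e A, ds != [::] -> all (fun x => x <= e) ds ->
  (forall v, v \in A -> #|[set f in H | v \in f]| <= D) -> ~ pk H A ds ->
  r * #|GA H A| <= e.-1 * #|A| + size ds * (r * (r * (e * D))).
Proof.
move=> lin un r0; elim=> [//|d ds IH] e A _ /= /andP[de alle] Dv npk.
case: (boolP [exists w in A, d <= degA H A w]).
  case/exists_inP => w wA dw.
  have [S [Ssub Sd]] := exists_sub_card dw.
  have Se : forall f, f \in S -> [&& f \in H, w \in f & f \subset A].
    by move=> f /(subsetP Ssub); rewrite inE.
  have SH : S \subset H by apply/subsetP => f /Se /and3P[].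
  set X := cover S.
  have XA : X \subset A by apply: cover_sub => f /Se /and3P[].
  have npk' : ~ pk H (A :\: X) ds.
    move=> h; apply: npk; exists w, S; split => // f /Se /and3P[_ -> ->] //.
  case: ds IH alle npk npk' => [_ _ _ npk'|d' ds' IH alle _ npk']; first by exfalso; apply: npk'.
  have Dv' : forall v, v \in A :\: X -> #|[set f in H | v \in f]| <= D.
    by move=> v; rewrite inE => /andP[_ /Dv].
  have IH' := IH e (A :\: X) isT alle Dv' npk'.
  have hG := GA_drop A (fun x xX => Dv x (subsetP XA x xX)).
  have hX : #|X| <= r * d by rewrite -Sd; exact: cover_card un SH.
  have hAX : #|A :\: X| <= #|A| := subset_leq_card (subsetDl A X).
  have h1 : r * #|GA H A| <= r * #|GA H (A :\: X)| + r * (#|X| * D).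
    by rewrite -mulnDr leq_mul2l hG orbT.
  have h2 : r * (#|X| * D) <= r * (r * (e * D)).
    rewrite leq_mul2l mulnA leq_mul2r; apply/orP; right; apply/orP; right.
    apply: leq_trans hX _; by rewrite leq_mul2l de orbT.
  have h3 : e.-1 * #|A :\: X| <= e.-1 * #|A| by rewrite leq_mul2l hAX orbT.
  move: IH' h1 h2 h3; rewrite /=.
  set K := r * (r * (e * D)).
  move=> IH' h1 h2 h3; nia.
move/exists_inPn => hn.
apply: leq_trans (leq_addr _ _).
rewrite (sum_degA _ un) mulnC -sum_nat_const; apply: leq_sum => v vA.
have := hn v vA; rewrite -ltnNge => hd; lia.
Qed.

Lemma offdiag_card (T : finType) (B : {set T}) :
  #|[set p in setX B B | p.1 != p.2]| = #|B| * #|B| - #|B|.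
Proof.
have Dsub : [set (x,x) | x in B] \subset setX B B.
  by apply/subsetP => p /imsetP [x xB ->]; rewrite in_setX xB.
have Dc : #|[set (x,x) | x in B]| = #|B| by rewrite card_imset // => x y [].
have -> : [set p in setX B B | p.1 != p.2] = setX B B :\: [set (x,x) | x in B].
  apply/setP => p; rewrite !inE; case: p => x y /=.
  apply/idP/idP.
    move=> /andP[xyB nxy]; rewrite xyB andbT; apply/imsetP => -[z zB [xz yz]].
    by rewrite xz yz eqxx in nxy.
  move=> /andP[nim xyB]; rewrite xyB /=; apply/negP => /eqP xy; subst y.
  apply: (negP nim); apply/imsetP; exists x => //; by move: xyB => /andP[].
have := cardsID [set (x,x) | x in B] (setX B B).
rewrite (setIidPr Dsub) Dc cardsX; lia.
Qed.

End Gen3.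

Section Gen4.
Variable W : finType.
Implicit Types (H S : {set {set W}}) (A B X Z L : {set W}).

Lemma tri_ineq r t s : r = t + s -> 0 < t ->
  r * r.-1 <= r * (t * s) + (t * t - t).
Proof. move=> -> t0; case: t t0 => // t _; case: s => [|s]; nia. Qed.

Lemma E1_count r H L : lin H -> uniform r H ->
  r * r.-1 * #|[set e in H | ~~ [disjoint e & L]]| <=
  r * (#|L| * (#|W| - #|L|)) + (#|L| * #|L| - #|L|).
Proof.
move=> lin /forall_inP un.
set E1 := [set e in H | ~~ [disjoint e & L]].
set Q1 := setX L (~: L).
set Q2 := [set p in setX L L | p.1 != p.2].
have key (Q : {set W * W}) : (forall p, p \in Q -> p.1 != p.2) ->
    \sum_(e in E1) #|[set p | (p \in Q) && ((p.1 \in e) && (p.2 \in e))]| <= #|Q|.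
  move=> hQ.
  rewrite (double_count (fun e => e \in E1) (fun p => p \in Q)
                        (fun e p => (p.1 \in e) && (p.2 \in e))).
  rewrite -sum1_card; apply: leq_sum => p pQ.
  apply: leq_trans _ (pair_le1 lin (hQ p pQ)).
  apply: subset_leq_card; apply/subsetP => e; rewrite !inE.
  by move=> /andP[/andP[-> _] ->].
have k1 := key Q1 (fun p => ltac:(case: p => x y; rewrite in_setX inE /=;
   case/andP => xL yL; apply/eqP => xy; by move: yL; rewrite -xy xL)).
have k2 := key Q2 (fun p => ltac:(by rewrite inE => /andP[])).
have cQ1 : #|Q1| = #|L| * (#|W| - #|L|).
  by rewrite cardsX [#|~: L|]cardsCs setCK.
rewrite cQ1 in k1; rewrite /Q2 offdiag_card in k2.
have per : forall e, e \in E1 ->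
   r * r.-1 <= r * #|[set p | (p \in Q1) && ((p.1 \in e) && (p.2 \in e))]|
             + #|[set p | (p \in Q2) && ((p.1 \in e) && (p.2 \in e))]|.
  move=> e; rewrite inE => /andP[eH nd].
  have e1 : [set p | (p \in Q1) && ((p.1 \in e) && (p.2 \in e))] = setX (e :&: L) (e :\: L).
    apply/setP => -[x y]; rewrite !inE /=.
    by case: (x \in L); case: (y \in L); case: (x \in e); case: (y \in e).
  have e2 : [set p | (p \in Q2) && ((p.1 \in e) && (p.2 \in e))] =
            [set p in setX (e :&: L) (e :&: L) | p.1 != p.2].
    apply/setP => -[x y]; rewrite /Q2 !inE /=.
    by case: (x \in L); case: (y \in L); case: (x \in e); case: (y \in e); case: (x == y).
  rewrite e1 e2 offdiag_card cardsX.
  apply: tri_ineq; first by rewrite cardsID (eqP (un e eH)).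
  by rewrite card_gt0 setI_eq0.
have : \sum_(e in E1) (r * r.-1) <=
   \sum_(e in E1) (r * #|[set p | (p \in Q1) && ((p.1 \in e) && (p.2 \in e))]|
             + #|[set p | (p \in Q2) && ((p.1 \in e) && (p.2 \in e))]|).
  exact: leq_sum.
rewrite big_split /= sum_nat_const => h.
have h2 : \sum_(e in E1) r * #|[set p | (p \in Q1) && ((p.1 \in e) && (p.2 \in e))]|
   <= r * (#|L| * (#|W| - #|L|)).
  by rewrite -big_distrr leq_mul2l k1 orbT.
have -> : r * r.-1 * #|E1| = #|E1| * (r * r.-1) by rewrite mulnC.
exact: leq_trans h (leq_add h2 k2).
Qed.

Lemma H_split H L : #|H| = #|[set e in H | ~~ [disjoint e & L]]| + #|GA H (~: L)|.
Proof.
rewrite -(cardsID [set e : {set W} | ~~ [disjoint e & L]] H) /GA; congr (_ + _).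
  by apply: eq_card => e; rewrite !inE andbC.
by apply: eq_card => e; rewrite !inE negbK disjoints_subset andbC.
Qed.

End Gen4.

Lemma arithB r l n e E1 E0 K :
  2 <= r -> r * r.-1 * E1 <= r * (l * (n - l)) + l * l.-1 ->
  r * E0 <= e.-1 * n + K ->
  2 * l + 2 + l * l + r * e * l.+1 + r * K <= n ->
  r * r.-1 * (E1 + E0) <= r.-1 * e.-1 * (n - l.+1) + r * l.+1 * (n - l.+1) + l.+1 * l.+1.-1.
Proof.
case: r => [//|[//|s]] _ /=.
have fe : e.-1 <= e by apply: leq_pred.
move: (e.-1) fe => f fe h1 h2 hn.
have [m nm] : exists m, n = l.+1 + m by exists (n - l.+1); lia.
subst n.
have e1 : l.+1 + m - l = m.+1 by lia.
have e2 : l.+1 + m - l.+1 = m by lia.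
rewrite e1 e2 in h1 *.
have h3 : s.+2 * s.+1 * (E1 + E0) <= s.+2 * (l * m.+1) + l * l.-1 + s.+1 * (f * (l.+1 + m) + K).
  have : s.+2 * s.+1 * E0 <= s.+1 * (f * (l.+1 + m) + K).
    by rewrite (mulnC s.+2) -mulnA leq_mul2l h2 orbT.
  rewrite mulnDr; lia.
apply: leq_trans h3 _.
have hm : l + 1 + l * l + s.+2 * e * l.+1 + s.+2 * K <= m by lia.
have h4 : s.+1 * f * l.+1 <= s.+2 * e * l.+1 by apply: leq_mul => //; apply: leq_mul.
have h5 : s.+1 * K <= s.+2 * K by apply: leq_mul.
clear hn h2 e1 e2; case: l h1 hm h4 h5 => [|l] /= h1 hm h4 h5; nia.
Qed.

Lemma arithA r l n d E1 E0 :
  r * r.-1 * E1 <= r * (l * (n - l)) + l * l.-1 ->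
  r * E0 <= d.-1 * (n - l) ->
  r * r.-1 * (E1 + E0) <= r.-1 * d.-1 * (n - l) + r * l * (n - l) + l * l.-1.
Proof.
move=> h1 h2.
have : r * r.-1 * E0 <= r.-1 * (d.-1 * (n - l)).
  by rewrite (mulnC r) -mulnA leq_mul2l h2 orbT.
rewrite mulnDr -!mulnA; lia.
Qed.

Lemma degA_T (W : finType) (H : {set {set W}}) v :
  degA H setT v = #|[set f in H | v \in f]|.
Proof. by apply: eq_card => f; rewrite !inE subsetT andbT. Qed.

Section Core.
Variables (W : finType) (r : nat) (H : {set {set W}}) (k : nat) (dn : nat -> nat).
Hypotheses (lin_H : lin H) (un : uniform r H) (r2 : 2 <= r) (k0 : 0 < k)
  (dpos : forall j, j < k -> 0 < dn j)
  (dmon : forall i j, i <= j -> j < k -> dn j <= dn i)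
  (npk : ~ pk H setT (mkseq dn k)).

Local Notation ds := (mkseq dn k).
Local Notation S := (sumn (mkseq dn k)).
Local Notation D := (2 * r * S + k + 1).
Local Notation K := ((k + 1) * (r * (r * (dn 0 * D)))).
Local Notation deg v := #|[set f in H | v \in f]|.

Lemma r0 : 0 < r. Proof. exact: leq_trans r2. Qed.

Lemma sumn_take l : sumn (take l ds) <= S.
Proof. by rewrite -{2}(cat_take_drop l ds) sumn_cat leq_addr. Qed.

Lemma sumn_drop l : sumn (drop l ds) <= S.
Proof. by rewrite -{2}(cat_take_drop l ds) sumn_cat leq_addl. Qed.

Lemma drop_all l e : (forall j, l <= j -> j < k -> dn j <= e) -> all (fun x => x <= e) (drop l ds).
Proof.
move=> h; apply/allP => x; rewrite /mkseq -map_drop drop_iota => /mapP [j].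
rewrite mem_iota => /andP[lj jk] ->; apply: h; lia.
Qed.

Lemma dn_le0 j : j < k -> dn j <= dn 0.
Proof. by move=> jk; apply: dmon. Qed.

Theorem core_upper : 2 * k + 2 + k * k + r * dn 0 * k + r * K <= #|W| ->
  exists2 l, l < k &
    r * r.-1 * #|H| <= r.-1 * (dn l).-1 * (#|W| - l) + r * l * (#|W| - l) + l * l.-1.
Proof.
move=> nN.
set L := [set v | D <= deg v].
have degL : forall v, v \in L -> D <= degA H setT v by move=> v; rewrite inE degA_T.
have Lk : #|L| < k.
  rewrite ltnNge; apply/negP => kL; apply: npk.
  apply: (greedy lin_H un r0 (cs := take k (enum L))).
  - by rewrite size_takel ?size_mkseq // -cardE.
  - exact: take_uniq (enum_uniq _).
  - by move=> c _; rewrite inE.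
  move=> c /mem_take; rewrite mem_enum => /degL; apply: leq_trans.
  rewrite size_takel -?cardE //; lia.
set l := #|L|.
have nl : #|~: L| = #|W| - l by rewrite -(cardsC L); lia.
have Dle : forall v, v \in ~: L -> deg v <= D.
  by move=> v; rewrite !inE -ltnNge => /ltnW.
have ntail : ~ pk H (~: L) (drop l ds).
  move=> h; have [Z [ZL Zc HZ]] := pk_supp un h; apply: npk.
  have e1 : ~: Z :|: Z = setT by apply/setP => x; rewrite !inE orNb.
  rewrite -e1 -(cat_take_drop l ds); apply: pk_cat => //.
    by rewrite disjoints_subset.
  apply: (greedy lin_H un r0 (cs := enum L)).
  - by rewrite size_takel -?cardE // size_mkseq ltnW.
  - exact: enum_uniq.
  - move=> c; rewrite mem_enum => cL; rewrite in_setC; apply/negP => cZ.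
    by have := subsetP ZL c cZ; rewrite in_setC cL.
  move=> c; rewrite mem_enum => cL.
  have cZ : c \notin Z by apply/negP => cZ; have := subsetP ZL c cZ; rewrite in_setC cL.
  have h1 := degA_drop setT lin_H cZ; rewrite setTD in h1.
  have h2 := degL c cL.
  have h3 : r * sumn (take l ds) <= r * S by rewrite leq_mul2l sumn_take orbT.
  have h4 : r * sumn (drop l ds) <= r * S by rewrite leq_mul2l sumn_drop orbT.
  rewrite -cardE; lia.
have E1c := E1_count L lin_H un.
have Hs := H_split H L.
have lk : l < size ds by rewrite size_mkseq.
case: (boolP [exists w in ~: L, dn l <= degA H (~: L) w]); last first.
  move/exists_inPn => hn; exists l => //.
  rewrite Hs; apply: arithA; first by rewrite (_ : l * l.-1 = l * l - l) // -subn1 mulnBr muln1.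
  rewrite (sum_degA _ un) -nl mulnC -sum_nat_const; apply: leq_sum => v vA.
  have := hn v vA; rewrite -ltnNge => hd; lia.
case/exists_inP => w wA dw.
have [S0 [Ssub Sd]] := exists_sub_card dw.
have Se : forall f, f \in S0 -> [&& f \in H, w \in f & f \subset ~: L].
  by move=> f /(subsetP Ssub); rewrite inE.
have SH : S0 \subset H by apply/subsetP => f /Se /and3P[].
set X := cover S0.
have XA : X \subset ~: L by apply: cover_sub => f /Se /and3P[].
have dd : drop l ds = dn l :: drop l.+1 ds by rewrite (drop_nth 0 lk) nth_mkseq.
have npk' : ~ pk H (~: L :\: X) (drop l.+1 ds).
  move=> h; apply: ntail; rewrite dd; exists w, S0; split => // f /Se /and3P[_ -> ->] //.
have lk1 : l.+1 < k.
  rewrite ltn_neqAle Lk andbT; apply/negP => /eqP ek; apply: npk'.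
  by rewrite drop_oversize // size_mkseq ek.
exists l.+1 => //.
set e := dn l.+1.
have dne : drop l.+1 ds != [::].
  by rewrite -size_eq0 size_drop size_mkseq; apply/negP => /eqP; lia.
have alle : all (fun x => x <= e) (drop l.+1 ds).
  by apply: drop_all => j lj jk; apply: dmon.
have hB := boundedB lin_H un r0 dne alle
   (fun v vA => Dle v (subsetP (subsetDl _ _) v vA)) npk'.
have hG := GA_drop (~: L) (fun x xX => Dle x (subsetP XA x xX)).
have hX : #|X| <= r * dn l by rewrite -Sd; exact: cover_card un SH.
have hAX : #|~: L :\: X| <= #|W| by apply: max_card.
have hsz : size (drop l.+1 ds) <= k by rewrite size_drop size_mkseq leq_subr.
have e0 : e <= dn 0 by apply: dn_le0.
have l0 : dn l <= dn 0 by apply: dn_le0; lia.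
have hE0 : r * #|GA H (~: L)| <= e.-1 * #|W| + K.
  have a1 : e.-1 * #|~: L :\: X| <= e.-1 * #|W| by rewrite leq_mul2l hAX orbT.
  have a2 : size (drop l.+1 ds) * (r * (r * (e * D))) <= k * (r * (r * (dn 0 * D))).
    apply: leq_mul => //; rewrite !leq_mul2l; apply/orP; right; apply/orP; right.
    by rewrite leq_mul2r e0 orbT.
  have a3 : r * (#|X| * D) <= r * (r * (dn 0 * D)).
    rewrite leq_mul2l mulnA leq_mul2r; apply/orP; right; apply/orP; right.
    apply: leq_trans hX _; by rewrite leq_mul2l l0 orbT.
  have a4 : r * #|GA H (~: L)| <= r * #|GA H (~: L :\: X)| + r * (#|X| * D).
    by rewrite -mulnDr leq_mul2l hG orbT.
  apply: leq_trans a4 _; apply: leq_trans (leq_add hB a3) _.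
  rewrite mulnDl mul1n addnA; apply: leq_add => //; exact: leq_add.
rewrite Hs; apply: (arithB r2 _ hE0).
  by rewrite (_ : l * l.-1 = l * l - l) // -subn1 mulnBr muln1.
have : r * e * l.+1 <= r * dn 0 * k by apply: leq_mul; rewrite ?leq_mul2l ?e0 ?orbT // ltnW.
move=> hre; have hll : l * l <= k * k by apply: leq_mul; apply: ltnW.
apply: leq_trans _ nN; rewrite leq_add2r; apply: leq_add => //; apply: leq_add => //.
rewrite leq_add2r leq_mul2l; lia.
Qed.

End Core.

Section PkNth.
Variables (W : finType) (H : {set {set W}}) (x0 : W).

Lemma pk_nth ds A : pk H A ds ->
  exists cs : seq W, exists Ss : seq {set {set W}},
  [/\ size cs = size ds, size Ss = size ds,
   forall j, j < size ds -> [/\ nth set0 Ss j \subset H, #|nth set0 Ss j| = nth 0 ds j,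
        (forall e, e \in nth set0 Ss j -> nth x0 cs j \in e) & cover (nth set0 Ss j) \subset A] &
   forall j1 j2, j1 < size ds -> j2 < size ds -> j1 != j2 ->
        [disjoint cover (nth set0 Ss j1) & cover (nth set0 Ss j2)]].
Proof.
elim: ds A => [|d ds IH] A /=.
  by move=> _; exists [::], [::]; split.
case=> c [S [SH Sd Se Hr]].
have [cs [Ss [h1 h2 h3 h4]]] := IH _ Hr.
have cA : cover S \subset A by apply: cover_sub => e /Se /andP[].
exists (c :: cs), (S :: Ss); split => /=; rewrite ?h1 ?h2 //.
  case=> [|j] /= jl; first by split => // e /Se /andP[].
  have [a1 a2 a3 a4] := h3 j jl; split => //; apply: subset_trans a4 _; exact: subsetDl.
have dis : forall j, j < size ds -> [disjoint cover S & cover (nth set0 Ss j)].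
  move=> j jl; have [_ _ _ a4] := h3 j jl.
  rewrite disjoint_sym disjoints_subset; apply: subset_trans a4 _.
  by apply/subsetP => x; rewrite !inE => /andP[].
case=> [|j1] [|j2] //= j1l j2l ne.
- exact: dis.
- by rewrite disjoint_sym; apply: dis.
- exact: h4.
Qed.
End PkNth.

Section Copy.
Variables (W : finType) (k r : nat) (d : 'I_k -> nat) (H : {set {set W}}) (x0 : W).
Variables (cf : 'I_k -> W) (Sf : 'I_k -> {set {set W}}).
Hypotheses (lin_H : lin H) (un : uniform r H) (r2 : 2 <= r) (dpos : forall i, 0 < d i)
  (SH : forall i, Sf i \subset H) (Sd : forall i, #|Sf i| = d i)
  (Sc : forall i e, e \in Sf i -> cf i \in e)
  (Sdis : forall i i', i != i' -> [disjoint cover (Sf i) & cover (Sf i')]).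

Definition Ed (i : 'I_k) (j : nat) : {set W} := nth set0 (enum (Sf i)) j.

Lemma Ed_in i (j : 'I_(d i)) : Ed i j \in Sf i.
Proof. by rewrite /Ed -mem_enum mem_nth // -cardE Sd. Qed.

Lemma Ed_c i (j : 'I_(d i)) : cf i \in Ed i j.
Proof. exact: Sc (Ed_in j). Qed.

Lemma Ed_H i (j : 'I_(d i)) : Ed i j \in H.
Proof. exact: subsetP (SH i) _ (Ed_in j). Qed.

Lemma Ed_size i (j : 'I_(d i)) : size (enum (Ed i j :\ cf i)) = r.-1.
Proof.
rewrite -cardE; have := cardsD1 (cf i) (Ed i j); rewrite Ed_c.
have /forall_inP un' := un; rewrite (eqP (un' _ (Ed_H j))); lia.
Qed.

Lemma Ed_inj i (j j' : 'I_(d i)) : Ed i j = Ed i j' -> j = j'.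
Proof.
move=> e; apply: val_inj; apply/eqP.
have sz : size (enum (Sf i)) = d i by rewrite -cardE Sd.
have hu := @nth_uniq _ set0 (enum (Sf i)) j j'.
rewrite -hu ?enum_uniq ?sz //; by rewrite /Ed in e; rewrite e.
Qed.

Definition fmap (u : star_vert r d) : W :=
  match tagged u with
  | None => cf (tag u)
  | Some (j, t) => nth x0 (enum (Ed (tag u) j :\ cf (tag u))) t
  end.

Lemma fmap_some i (j : 'I_(d i)) (t : 'I_(r.-1)) :
  fmap (Tagged (fun i => option ('I_(d i) * 'I_(r.-1))) (Some (j, t))) \in Ed i j :\ cf i.
Proof. by rewrite /fmap /= -mem_enum mem_nth // Ed_size. Qed.

Lemma fmap_cover u : fmap u \in cover (Sf (tag u)).
Proof.
case: u => i [[j t]|] /=.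
  apply/bigcupP; exists (Ed i j); first exact: Ed_in.
  by have := fmap_some j t; rewrite inE => /andP[].
apply/bigcupP; exists (Ed i (Ordinal (dpos i))); first exact: Ed_in.
exact: Ed_c.
Qed.

Lemma fmap_inj : injective fmap.
Proof.
move=> u v e.
have tuv : tag u = tag v.
  apply/eqP; apply/negPn/negP => ne.
  have := Sdis ne; rewrite disjoints_subset => /subsetP /(_ _ (fmap_cover u)).
  by rewrite inE e fmap_cover.
case: u v e tuv => i a [i' b] /= e tuv; subst i'.
case: a b e => [[j t]|] [[j' t']|] e.
- have h1 := fmap_some j t; have h2 := fmap_some j' t'.
  rewrite e in h1.
  have jj : j = j'.
    apply: Ed_inj; apply: (linP lin_H (Ed_H j) (Ed_H j')
        (u := cf i) (v := fmap (Tagged (fun i => option ('I_(d i) * 'I_(r.-1))) (Some (j', t'))))).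
    + by move: h2; rewrite !inE eq_sym => /andP[].
    + exact: Ed_c.
    + by move: h1; rewrite !inE => /andP[].
    + exact: Ed_c.
    + by move: h2; rewrite !inE => /andP[].
  subst j'; congr Tagged; congr (Some (_, _)).
  move: e; rewrite /fmap /= => /eqP; rewrite nth_uniq ?enum_uniq ?Ed_size //.
  by move/eqP/val_inj.
- by have := fmap_some j t; rewrite e !inE eqxx.
- by have := fmap_some j' t'; rewrite -e !inE eqxx.
- by [].
Qed.

Lemma fmap_edge i (j : 'I_(d i)) : [set fmap x | x in star_edge r j] = Ed i j.
Proof.
apply/setP => x; apply/imsetP/idP.
  case=> u; rewrite /star_edge !inE => /orP[/eqP ->|/imsetP [t _ ->]] ->.
    exact: Ed_c.
  by have := fmap_some j t; rewrite inE => /andP[].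
move=> xE; case: (eqVneq x (cf i)) => [->|xc].
  by exists (@Tagged _ i (fun i => option ('I_(d i) * 'I_(r.-1))) None); rewrite // /star_edge !inE eqxx.
have xin : x \in enum (Ed i j :\ cf i) by rewrite mem_enum !inE xc.
have ix : index x (enum (Ed i j :\ cf i)) < r.-1 by rewrite -(Ed_size j) index_mem.
exists (@Tagged _ i (fun i => option ('I_(d i) * 'I_(r.-1))) (Some (j, Ordinal ix))).
  by rewrite /star_edge !inE; apply/orP; right; apply/imsetP; exists (Ordinal ix).
by rewrite /fmap /= nth_index.
Qed.

Lemma copy_from : contains_copy (star_forest r d) H.
Proof.
apply/existsP; exists (finfun fmap); apply/andP; split.
  by apply/injectiveP => u v; rewrite !ffunE; apply: fmap_inj.
apply/forall_inP => e /imsetP [x _ ->].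
rewrite (eq_imset _ (ffunE fmap)); case: x => i j /=; rewrite fmap_edge; exact: Ed_H.
Qed.

End Copy.

Section NoCopy.
Variables (W : finType) (k r : nat) (d : 'I_k -> nat) (H : {set {set W}}) (U : {set W}).
Variable (i0 : 'I_k).
Hypotheses (r2 : 2 <= r) (dpos : forall i, 0 < d i)
  (dmon : forall i j : 'I_k, (i <= j)%N -> (d j <= d i)%N)
  (Uc : #|U| = i0)
  (degU : forall w, #|[set e in H | (w \in e) && [disjoint e & U]]| <= (d i0).-1).

Lemma no_copy : ~~ contains_copy (star_forest r d) H.
Proof.
apply/negP => /existsP [f /andP[/injectiveP finj /forall_inP fH]].
have r1 : 0 < r.-1 by lia.
pose comp (i : 'I_k) := [set u : star_vert r d | tag u == i].
have hit : forall i : 'I_k, (i <= i0)%N -> exists x, (x \in U) && (x \in f @: comp i).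
  move=> i ii0; apply/existsP; apply: contraT => /existsPn nx.
  pose w := f (@Tagged _ i (fun i => option ('I_(d i) * 'I_(r.-1))) None).
  pose E := [set f @: star_edge r j | j : 'I_(d i)].
  have Ec : #|E| = d i.
    rewrite card_imset ?card_ord //.
    move=> j j' /(imset_inj finj) e.
    have : @Tagged _ i (fun i => option ('I_(d i) * 'I_(r.-1))) (Some (j, Ordinal r1))
           \in star_edge r j'.
      by rewrite -e /star_edge !inE; apply/orP; right; apply/imsetP; exists (Ordinal r1).
    rewrite /star_edge !inE => /orP[/eqP|/imsetP [t _]].
      by move/eqP; rewrite eq_Tagged.
    by move/eqP; rewrite eq_Tagged /= => /eqP [->].
  have Esub : E \subset [set e in H | (w \in e) && [disjoint e & U]].
    apply/subsetP => e /imsetP [j _ ->]; rewrite !inE; apply/and3P; split.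
    - apply: fH; apply/imsetP; by exists (Tagged (fun i => 'I_(d i)) j).
    - by apply/imsetP; eexists; last reflexivity; rewrite /star_edge !inE eqxx.
    - rewrite disjoints_subset; apply/subsetP => x /imsetP [u ue ->].
      rewrite inE; apply/negP => xU; have := nx (f u); rewrite xU /=.
      apply/negP/negPn/imsetP; exists u => //.
      move: ue; rewrite /star_edge !inE => /orP[/eqP ->//|/imsetP [t _ ->]] //.
  have := leq_trans (subset_leq_card Esub) (degU w); rewrite Ec.
  have := dmon ii0; have := dpos i0; lia.
have /fin_all_exists [g hg] : forall i : 'I_i0.+1,
   exists x, (x \in U) && (x \in f @: comp (widen_ord (ltn_ord i0) i)).
  by move=> i; apply: hit; rewrite /= -ltnS.
have ginj : injective g.
  move=> i j e; apply/eqP; apply/negPn/negP => ne.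
  have /andP[_ /imsetP [u ui eu]] := hg i.
  have /andP[_ /imsetP [v vj ev]] := hg j.
  have fuv : f u = f v by rewrite -eu -ev e.
  move: ui vj; rewrite (finj _ _ fuv) !inE => /eqP -> /eqP /(congr1 val) /= ij.
  have ij' : i = j by apply: val_inj.
  by rewrite ij' eqxx in ne.
have : #|[set g i | i : 'I_i0.+1]| <= #|U|.
  by apply: subset_leq_card; apply/subsetP => x /imsetP [i _ ->]; have /andP[] := hg i.
by rewrite card_imset // card_ord Uc ltnn.
Qed.

End NoCopy.

Lemma divmod_uniq w h h' j j' : j < w -> j' < w -> h * w + j = h' * w + j' -> h = h' /\ j = j'.
Proof.
move=> jw j'w e.
have w0 : 0 < w by lia.
have := congr1 (fun x => x %/ w) e; rewrite /= !divnMDl // !divn_small // !addn0 => hh.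
split => //; subst h'; lia.
Qed.

Lemma slope_eq a a' b b' s s' j1 j2 k1 k2 :
  a + j1 = a' + k1 -> b + s * j1 = b' + s' * k1 ->
  a + j2 = a' + k2 -> b + s * j2 = b' + s' * k2 -> j1 != j2 -> s = s'.
Proof.
wlog lt : j1 j2 k1 k2 / j1 < j2.
  move=> hw e1 e2 e3 e4 ne; case: (ltngtP j1 j2) => h.
  - exact: hw e1 e2 e3 e4 ne.
  - by apply: (hw j2 j1 k2 k1) => //; rewrite eq_sym.
  - by rewrite h eqxx in ne.
move=> e1 e2 e3 e4 _.
have [t et] : exists t, j2 = j1 + t.+1 by exists (j2 - j1).-1; lia.
subst j2; have ek : k2 = k1 + t.+1 by lia.
subst k2.
move: e4; rewrite !mulnDr => e4.
have : s * t.+1 = s' * t.+1 by lia.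
by move/eqP; rewrite eqn_pmul2r // => /eqP.
Qed.

Lemma card_bigcup_le2 (T I : finType) (P : pred I) (F : I -> {set T}) :
  #|\bigcup_(i | P i) F i| <= \sum_(i | P i) #|F i|.
Proof.
elim/big_rec2: _ => [|i B s Pi IH]; first by rewrite cards0.
rewrite cardsU; apply: leq_trans (leq_subr _ _) _; by rewrite leq_add2l.
Qed.

Section Grid.
Variables (n i0 b r M C : nat).
Hypotheses (r2 : 2 <= r) (room : i0 + C * M <= n.+1) (Mbig : (i0 + b) * r <= M).

Definition wd s := if s < i0 then r.-1 else r.
Definition pt x y := i0 + x * M + y.
Definition Mp := M - (i0 + b) * r.
Definition valid s h y1 := [&& s < i0 + b, h < C %/ wd s & y1 < Mp].
Definition blk s h y1 : {set 'I_n.+1} :=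
  [set inord (pt (h * wd s + j) (y1 + s * j)) | j : 'I_(wd s)].
Definition gedge s h y1 : {set 'I_n.+1} :=
  (if s < i0 then [set inord s] else set0) :|: blk s h y1.

Lemma wd_pos s : 0 < wd s.
Proof. rewrite /wd; case: ifP => _; lia. Qed.

Lemma wd_le s : wd s <= r.
Proof. rewrite /wd; case: ifP => _; lia. Qed.

Lemma valid_bounds s h y1 j : valid s h y1 -> j < wd s ->
  [/\ h * wd s + j < C, y1 + s * j < M & pt (h * wd s + j) (y1 + s * j) < n.+1].
Proof.
move=> /and3P[sc hC yM] jw.
have w0 := wd_pos s.
have hx : h * wd s + j < C.
  have : h.+1 * wd s <= C.
    apply: leq_trans (leq_divM C (wd s)); rewrite leq_mul2r hC orbT //.
  rewrite mulSn; lia.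
have hy : y1 + s * j < M.
  have : s * j < (i0 + b) * r by apply: ltn_mul => //; apply: leq_trans jw (wd_le s).
  move: yM; rewrite /Mp; lia.
split => //; rewrite /pt.
have : (h * wd s + j).+1 * M <= C * M by rewrite leq_mul2r hx orbT.
rewrite mulSn; lia.
Qed.

Lemma pt_ge x y : i0 <= pt x y.
Proof. by rewrite /pt -addnA leq_addr. Qed.

Lemma ptinj x y x' y' : y < M -> y' < M -> pt x y = pt x' y' -> x = x' /\ y = y'.
Proof.
move=> yM y'M; rewrite /pt -!addnA => /addnI; exact: divmod_uniq.
Qed.

Lemma i0n s : s < i0 -> s < n.+1.
Proof. lia. Qed.

Lemma mem_gedge s h y1 (v : 'I_n.+1) : valid s h y1 ->
  (v \in gedge s h y1) =
  ((s < i0) && (val v == s)) ||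
  [exists j : 'I_(wd s), val v == pt (h * wd s + j) (y1 + s * j)].
Proof.
move=> vd; rewrite /gedge inE; congr orb.
  case: ifP => si; rewrite ?inE //.
  by rewrite -(inj_eq val_inj) /= inordK // i0n.
apply/imsetP/existsP => [[j _ ->]|[j /eqP e]].
  by exists j; have [_ _ hp] := valid_bounds vd (ltn_ord j); rewrite /= inordK.
exists j => //; apply: val_inj; have [_ _ hp] := valid_bounds vd (ltn_ord j); by rewrite /= inordK.
Qed.

Lemma grid_mem s h y1 (v : 'I_n.+1) : valid s h y1 -> v \in gedge s h y1 -> i0 <= val v ->
  exists2 j, j < wd s & val v = pt (h * wd s + j) (y1 + s * j).
Proof.
move=> vd; rewrite mem_gedge // => /orP[/andP[si /eqP e]|/existsP[j /eqP e]].
  lia.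
by move=> _; exists j.
Qed.

Lemma cen_mem s h y1 (v : 'I_n.+1) : valid s h y1 -> v \in gedge s h y1 -> val v < i0 ->
  s < i0 /\ val v = s.
Proof.
move=> vd; rewrite mem_gedge // => /orP[/andP[si /eqP e]|/existsP[j /eqP e]] //.
by have := pt_ge (h * wd s + j) (y1 + s * j); lia.
Qed.

Lemma share1 s h y1 h' y1' (v : 'I_n.+1) : valid s h y1 -> valid s h' y1' ->
  v \in gedge s h y1 -> v \in gedge s h' y1' -> i0 <= val v -> h = h' /\ y1 = y1'.
Proof.
move=> vd vd' v1 v2 gv.
have [j jw e1] := grid_mem vd v1 gv.
have [j' jw' e2] := grid_mem vd' v2 gv.
have [_ b1 _] := valid_bounds vd jw.
have [_ b2 _] := valid_bounds vd' jw'.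
rewrite e1 in e2; have [x1 x2] := ptinj b1 b2 e2.
have [hh jj] := divmod_uniq jw jw' x1.
subst; split => //; lia.
Qed.

Lemma share2 s h y1 s' h' y1' (u v : 'I_n.+1) : valid s h y1 -> valid s' h' y1' ->
  u != v -> u \in gedge s h y1 -> v \in gedge s h y1 ->
  u \in gedge s' h' y1' -> v \in gedge s' h' y1' -> [/\ s = s', h = h' & y1 = y1'].
Proof.
move=> vd vd' uv u1 v1 u2 v2.
have uv' : val u != val v by rewrite (inj_eq val_inj).
have fin : s = s' -> [/\ s = s', h = h' & y1 = y1'].
  move=> ss; subst s'.
  case: (leqP i0 (val u)) => gu.
    by have [] := share1 vd vd' u1 u2 gu.
  case: (leqP i0 (val v)) => gv.
    by have [] := share1 vd vd' v1 v2 gv.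
  have [_ e1] := cen_mem vd u1 gu; have [_ e2] := cen_mem vd v1 gv.
  by move: uv'; rewrite e1 e2 eqxx.
apply: fin.
case: (leqP i0 (val u)) => gu; last first.
  by have [_ e1] := cen_mem vd u1 gu; have [_ e2] := cen_mem vd' u2 gu; rewrite -e1 -e2.
case: (leqP i0 (val v)) => gv; last first.
  by have [_ e1] := cen_mem vd v1 gv; have [_ e2] := cen_mem vd' v2 gv; rewrite -e1 -e2.
have [j jw e1] := grid_mem vd u1 gu.
have [j' jw' e1'] := grid_mem vd' u2 gu.
have [k kw e2] := grid_mem vd v1 gv.
have [k' kw' e2'] := grid_mem vd' v2 gv.
have [_ b1 _] := valid_bounds vd jw.
have [_ b1' _] := valid_bounds vd' jw'.
have [_ b2 _] := valid_bounds vd kw.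
have [_ b2' _] := valid_bounds vd' kw'.
rewrite e1 in e1'; rewrite e2 in e2'.
have [x1 y1e] := ptinj b1 b1' e1'.
have [x2 y2e] := ptinj b2 b2' e2'.
apply: (slope_eq x1 y1e x2 y2e).
by apply/negP => /eqP jk; subst k; move: uv'; rewrite e1 e2 eqxx.
Qed.

Lemma blk_card s h y1 : valid s h y1 -> #|blk s h y1| = wd s.
Proof.
move=> vd; rewrite card_imset ?card_ord // => j j' /(congr1 val).
have [_ b1 p1] := valid_bounds vd (ltn_ord j).
have [_ b2 p2] := valid_bounds vd (ltn_ord j').
rewrite /= !inordK // => /(ptinj b1 b2) [/addnI e _]; exact: val_inj.
Qed.

Lemma gedge_card s h y1 : valid s h y1 -> #|gedge s h y1| = r.
Proof.
move=> vd; rewrite /gedge; case: ifP => si.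
  rewrite cardsU1 blk_card // /wd si.
  have -> : (inord s : 'I_n.+1) \notin blk s h y1.
    apply/imsetP => -[j _ /(congr1 val)].
    have [_ _ p1] := valid_bounds vd (ltn_ord j).
    rewrite /= (inordK (i0n si)) (inordK p1) => e; have := pt_ge (h * wd s + j) (y1 + s * j); lia.
  lia.
by rewrite set0U blk_card // /wd si.
Qed.

Lemma two_vert s h y1 : valid s h y1 ->
  exists u v : 'I_n.+1, [/\ u \in gedge s h y1, v \in gedge s h y1 & u != v].
Proof. by move=> vd; apply/card_gt1P; rewrite gedge_card. Qed.

Lemma gedge_inj s h y1 s' h' y1' : valid s h y1 -> valid s' h' y1' ->
  gedge s h y1 = gedge s' h' y1' -> [/\ s = s', h = h' & y1 = y1'].
Proof.
move=> vd vd' e; have [u [v [u1 v1 uv]]] := two_vert vd.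
by apply: (share2 vd vd' uv u1 v1); rewrite -e.
Qed.

Definition A1 := C %/ r.-1.
Definition A2 := C %/ r.
Definition H1 := [set gedge p.1.1 p.1.2 p.2 | p : 'I_i0 * 'I_A1 * 'I_Mp].
Definition H2 := [set gedge (i0 + p.1.1) p.1.2 p.2 | p : 'I_b * 'I_A2 * 'I_Mp].
Definition Hg := H1 :|: H2.
Definition Uc : {set 'I_n.+1} := [set inord a | a : 'I_i0].

Lemma H1_valid (p : 'I_i0 * 'I_A1 * 'I_Mp) : valid p.1.1 p.1.2 p.2.
Proof.
case: p => [[a h] y] /=; have ai : a < i0 := ltn_ord a.
rewrite /valid /wd ai /=; apply/and3P; split; [lia | exact: ltn_ord | exact: ltn_ord].
Qed.

Lemma H2_valid (p : 'I_b * 'I_A2 * 'I_Mp) : valid (i0 + p.1.1) p.1.2 p.2.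
Proof.
case: p => [[a h] y] /=; have ai : ~~ (i0 + a < i0) by rewrite -leqNgt leq_addr.
rewrite /valid /wd (negbTE ai) /=; apply/and3P; split; [| exact: ltn_ord | exact: ltn_ord].
by rewrite ltn_add2l ltn_ord.
Qed.

Lemma Hg_valid e : e \in Hg -> exists s h y1, valid s h y1 /\ e = gedge s h y1.
Proof.
rewrite inE => /orP[/imsetP [p _ ->]|/imsetP [p _ ->]].
  by exists p.1.1, p.1.2, p.2; split => //; exact: H1_valid.
by exists (i0 + p.1.1), p.1.2, p.2; split => //; exact: H2_valid.
Qed.

Lemma Hg_uniform : uniform r Hg.
Proof.
apply/forall_inP => e /Hg_valid [s [h [y1 [vd ->]]]]; by rewrite gedge_card.
Qed.

Lemma Hg_linear : lin Hg.
Proof.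
apply/forall_inP => e eH; apply/forall_inP => f fH; apply/implyP => ne.
rewrite leqNgt; apply/negP => /card_gt1P [u [v [uI vI uv]]].
move: uI vI; rewrite !inE => /andP[ue uf] /andP[ve vf].
have [s [h [y1 [vd ee]]]] := Hg_valid eH.
have [s' [h' [y1' [vd' ff]]]] := Hg_valid fH.
subst e f.
have [e1 e2 e3] := share2 vd vd' uv ue ve uf vf; subst.
by rewrite eqxx in ne.
Qed.

Lemma H1_card : #|H1| = i0 * A1 * Mp.
Proof.
rewrite card_imset; first by rewrite !card_prod !card_ord.
move=> p q e; have [e1 e2 e3] := gedge_inj (H1_valid p) (H1_valid q) e.
case: p q e1 e2 e3 {e} => [[a h] y] [[a' h'] y'] /= e1 e2 e3.
by congr (_, _, _); apply: val_inj.
Qed.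

Lemma H2_card : #|H2| = b * A2 * Mp.
Proof.
rewrite card_imset; first by rewrite !card_prod !card_ord.
move=> p q e; have [e1 e2 e3] := gedge_inj (H2_valid p) (H2_valid q) e.
case: p q e1 e2 e3 {e} => [[a h] y] [[a' h'] y'] /= /addnI e1 e2 e3.
by congr (_, _, _); apply: val_inj.
Qed.

Lemma Hg_card : #|Hg| = i0 * A1 * Mp + b * A2 * Mp.
Proof.
rewrite cardsU H1_card H2_card.
suff -> : H1 :&: H2 = set0 by rewrite cards0 subn0.
apply/setP => e; rewrite !inE; apply/negP => /andP[/imsetP [p _ ep] /imsetP [q _ eq]].
have [e1 _ _] := gedge_inj (H1_valid p) (H2_valid q) (etrans (esym ep) eq).
case: p q e1 {ep eq} => [[a h] y] [[a' h'] y'] /= e1.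
by have := ltn_ord a; rewrite e1 ltnNge leq_addr.
Qed.

Lemma Uc_card : #|Uc| = i0.
Proof.
rewrite card_imset ?card_ord // => a a' /(congr1 val).
by rewrite /= !inordK ?i0n // => e; apply: val_inj.
Qed.

Lemma degU (w : 'I_n.+1) : #|[set e in Hg | (w \in e) && [disjoint e & Uc]]| <= b.
Proof.
pose P (c : 'I_b) := [set e in H2 | (w \in e) &&
   [exists p : 'I_A2 * 'I_Mp, e == gedge (i0 + c) p.1 p.2]].
have sub : [set e in Hg | (w \in e) && [disjoint e & Uc]] \subset \bigcup_(c : 'I_b) P c.
  apply/subsetP => e; rewrite !inE => /andP[/orP[|] eH /andP[we dis]].
    case/imsetP: eH => p _ ep; exfalso.
    move: dis; rewrite disjoints_subset => /subsetP /(_ (inord p.1.1)).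
    rewrite inE; have -> : (inord p.1.1 : 'I_n.+1) \in Uc by apply/imsetP; exists p.1.1.
    have hin : (inord p.1.1 : 'I_n.+1) \in gedge p.1.1 p.1.2 p.2.
      rewrite mem_gedge ?H1_valid //= inordK ?eqxx ?ltn_ord //; apply: i0n; exact: ltn_ord.
    by rewrite ep hin; move/(_ isT).
  case/imsetP: (eH) => p _ ep.
  apply/bigcupP; exists p.1.1 => //; rewrite !inE eH we /=.
  by apply/existsP; exists (p.1.2, p.2); rewrite ep.
apply: leq_trans (subset_leq_card sub) _.
apply: leq_trans (card_bigcup_le2 _ _) _.
rewrite -[X in _ <= X](card_ord b) -sum1_card; apply: leq_sum => c _.
apply/card_le1_eqP => e f; rewrite !inE.
move=> /andP[_ /andP[we /existsP [p /eqP ep]]] /andP[_ /andP[wf /existsP [q /eqP fq]]].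
have vp : valid (i0 + c) p.1 p.2.
  by have := H2_valid (c, p.1, p.2).
have vq : valid (i0 + c) q.1 q.2.
  by have := H2_valid (c, q.1, q.2).
subst e f.
have gw : i0 <= val w.
  rewrite leqNgt; apply/negP => wl; have [] := cen_mem vp we wl; lia.
by have [-> ->] := share1 vq vp wf we gw.
Qed.

End Grid.

Lemma bin2_mul x : 'C(x, 2) * 2 = x * x.-1.
Proof.
elim: x => // x IH; rewrite binS bin1 mulnDl IH; case: x {IH} => //= x; lia.
Qed.

Local Open Scope ring_scope.

Lemma bin2_rat x : ('C(x, 2))%:R = (x * x.-1)%:R / 2 :> rat.
Proof. by rewrite -bin2_mul natrM mulfK. Qed.

Lemma star_term_eq k r n (d : 'I_k -> nat) (i : 'I_k) : (2 <= r)%N -> (i <= n)%N ->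
  star_term r n d i =
  (r.-1 * (d i).-1 * (n - i) + r * i * (n - i) + i * i.-1)%N%:R / (r * r.-1)%N%:R.
Proof.
move=> r2 ilen; rewrite /star_term !bin2_rat.
case: r r2 => [|[|r]] // _ /=.
rewrite !natrD !natrM natrB //.
have -> : (i.-1)%:R = (if (i : nat) == 0%N then 0 else (i : nat)%:R - 1 :> rat).
  case: (i : nat) => [|ii] //=; by rewrite -addn1 natrD addrK.
set a := ((d i).-1)%:R; set m := (n%:R : rat); set j := ((i : nat)%:R : rat).
have h1 : (r.+2%:R : rat) != 0 by rewrite pnatr_eq0.
have h2 : (r.+1%:R : rat) != 0 by rewrite pnatr_eq0.
have hr : 0 <= (r%:R : rat) by rewrite ler0n.
by case: ((i : nat) == 0%N); field; apply/andP; split; apply/negP => /eqP; lra.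
Qed.

Lemma le_bigmax_rat (I : finType) (F : I -> rat) (i : I) : F i <= \big[Num.max/0]_(j : I) F j.
Proof.
rewrite /index_enum; have : i \in index_enum I by rewrite mem_index_enum.
rewrite /index_enum; elim: (Finite.enum I) => // a s IH.
rewrite inE big_cons => /orP[/eqP ->|/IH h]; rewrite le_max ?lexx //.
by rewrite h orbT.
Qed.

Lemma bigmax_rat_ge0 (I : finType) (F : I -> rat) : 0 <= \big[Num.max/0]_(j : I) F j.
Proof. elim/big_rec: _ => // j x _ h; by rewrite le_max h orbT. Qed.

Local Open Scope ring_scope.

Lemma eps_bound (eps : rat) : 0 < eps -> exists2 Q : nat, (0 < Q)%N & 1 / Q%:R <= eps.
Proof.
move=> e0; exists `|denq eps|%N; first by rewrite absz_gt0 denq_neq0.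
have hd : (`|denq eps|%N%:R : rat) = (denq eps)%:~R.
  by rewrite natr_absz ger0_norm // ltW // denq_gt0.
have dp : 0 < ((denq eps)%:~R : rat) by rewrite ltr0z denq_gt0.
by rewrite hd -{2}(divq_num_den eps) ler_pM2r ?invr_gt0 // ler1z -gtz0_ge1 numq_gt0.
Qed.

Section Main.
Variables (k' r : nat) (d : 'I_k'.+1 -> nat).
Hypotheses (r2 : (2 <= r)%N) (dpos : forall i, (0 < d i)%N)
  (dmon : forall i j : 'I_k'.+1, (i <= j)%N -> (d j <= d i)%N).

Let dn j := d (inord j).
Lemma dnE (i : 'I_k'.+1) : dn i = d i.
Proof. by rewrite /dn inord_val. Qed.
Lemma dmon' i j : (i <= j)%N -> (j < k'.+1)%N -> (dn j <= dn i)%N.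
Proof. move=> ij jk; apply: dmon; rewrite /= !inordK //; lia. Qed.

Lemma upper_part : exists N : nat, forall n : nat, (N <= n)%N ->
     (ex_lin r n (star_forest r d))%:R <= star_bound r n d.
Proof.
set k := k'.+1.
exists (2 * k + 2 + k * k + r * dn 0 * k +
  r * ((k + 1) * (r * (r * (dn 0 * (2 * r * sumn (mkseq dn k) + k + 1))))))%N => n nN.
rewrite /ex_lin; elim/big_ind: _ => [|x y hx hy|H /and3P[un lin ncp]].
- exact: bigmax_rat_ge0.
- by rewrite /maxn; case: ifP.
have npk : ~ pk H setT (mkseq dn k).
  move=> h.
  have [x0 _] : exists x0 : 'I_n, True by move: h; rewrite /mkseq /=; case=> c _; exists c.
  have [cs [Ss [h1 h2 h3 h4]]] := pk_nth x0 h.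
  rewrite size_mkseq in h3 h4.
  apply: (negP ncp).
  apply: (copy_from x0 (cf := fun i => nth x0 cs i) (Sf := fun i => nth set0 Ss i) lin un r2 dpos).
  - by move=> i; have [] := h3 i (ltn_ord i).
  - by move=> i; have [_ -> _ _] := h3 i (ltn_ord i); rewrite nth_mkseq // dnE.
  - by move=> i e; have [_ _ he _] := h3 i (ltn_ord i); apply: he.
  - by move=> i i' ne; apply: h4; rewrite ?ltn_ord // (inj_eq val_inj).
have k0 : (0 < k)%N by [].
have := core_upper lin un r2 k0 dmon' npk; rewrite card_ord => /(_ nN) [l lk hl].
apply: le_trans (le_bigmax_rat _ (inord l : 'I_k)).
have ln : (l <= n)%N by lia.
rewrite star_term_eq // ?inordK // ler_pdivlMr; last by rewrite ltr0n muln_gt0; lia.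
rewrite -natrM ler_nat -dnE inordK //; lia.
Qed.

Lemma lower_i (eps : rat) (Q : nat) (i : 'I_k'.+1) : (0 < Q)%N -> 1 / Q%:R <= eps ->
  exists N : nat, forall n : nat, (N <= n)%N ->
    star_term r n d i - eps * n%:R <= (ex_lin r n (star_forest r d))%:R.
Proof.
move=> Q0 hQ.
set i0 := (i : nat); set b := (d i).-1; set s := (r * i0 + r.-1 * b)%N.
set M := (2 * Q * s * (i0 + b) * r + (i0 + b) * r + 1)%N.
exists (Q * s * (i0 + M + r * M) + Q * (i0 * i0) + 2 + i0)%N => n nN.
case: n nN => [|n'] nN; first lia.
set C := ((n'.+1 - i0) %/ M)%N.
have M0 : (0 < M)%N by rewrite /M addn1.
have room : (i0 + C * M <= n'.+1)%N.
  have := leq_divM (n'.+1 - i0) M; rewrite -/C; lia.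
have Mbig : ((i0 + b) * r <= M)%N by rewrite /M; move: (2 * Q * s * (i0 + b) * r)%N ((i0 + b) * r)%N => X Y; lia.
set G := Hg n' i0 b r M C.
have adm : [&& uniform r G, lin G & ~~ contains_copy (star_forest r d) G].
  rewrite Hg_uniform // Hg_linear //=.
  apply: (no_copy (U := Uc n' i0) (i0 := i) r2 dpos dmon); first exact: Uc_card room Mbig.
  by move=> w; apply: degU room Mbig w.
have ge : (#|G| <= ex_lin r n'.+1 (star_forest r d))%N.
  by rewrite /ex_lin; apply: leq_bigmax_cond; exact: adm.
have r1 : (0 < r.-1)%N by lia.
have key := arith_low r i0 b Q n'.+1 M C (C %/ r.-1) (C %/ r) r2 Q0 (erefl M)
   (ltn_ceil (n'.+1 - i0) M0) (leq_divM _ _) (ltn_ceil C r1) (ltn_ceil C (ltnW r2))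
   (ltac:(lia)).
rewrite -(Hg_card r2 room Mbig) -/G in key.
apply: (@le_trans _ _ (#|G|%:R : rat)); last by rewrite ler_nat.
have il : (i0 <= n'.+1)%N by lia.
rewrite star_term_eq //.
set T := (r.-1 * (d i).-1 * (n'.+1 - i) + r * i * (n'.+1 - i) + i * i.-1)%N.
set R := (r * r.-1)%N.
have R0 : (0 < R)%N by rewrite muln_gt0; lia.
have hk : (Q * T)%:R <= (Q * R * #|G| + R * n'.+1)%N%:R :> rat by rewrite ler_nat.
rewrite !natrM natrD !natrM in hk.
have Qp : 0 < (Q%:R : rat) by rewrite ltr0n.
have Rp : 0 < (R%:R : rat) by rewrite ltr0n.
have hn : 0 <= (n'.+1%:R : rat) by rewrite ler0n.
have h1 : (n'.+1)%:R / Q%:R <= eps * (n'.+1)%:R.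
  by have := ler_wpM2r hn hQ; rewrite mul1r mulrC.
suff : T%:R / R%:R - (n'.+1)%:R / Q%:R <= #|G|%:R :> rat by move=> h2; lra.
have -> : T%:R / R%:R - (n'.+1)%:R / Q%:R =
   (Q%:R * T%:R - R%:R * (n'.+1)%:R) / (Q%:R * R%:R) :> rat.
  by field; apply/andP; split; rewrite lt0r_neq0.
rewrite ler_pdivrMr ?mulr_gt0 // /R natrM; nra.
Qed.

Lemma lower_part : forall eps : rat, 0 < eps -> exists N : nat, forall n : nat, (N <= n)%N ->
     star_bound r n d - eps * n%:R <= (ex_lin r n (star_forest r d))%:R.
Proof.
move=> eps e0; have [Q Q0 hQ] := eps_bound e0.
have /fin_all_exists [g hg] := fun i => lower_i i Q0 hQ.
exists (\max_i g i)%N => n nN.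
rewrite /star_bound; elim/big_rec: _ => [|i x _ hx].
  have : 0 <= eps * n%:R by rewrite mulr_ge0 // ?ltW // ler0n.
  have : 0 <= (ex_lin r n (star_forest r d))%:R :> rat by rewrite ler0n.
  lra.
rewrite lerBlDr ge_max; apply/andP; split; rewrite -lerBlDr //.
apply: hg; exact: leq_trans (@leq_bigmax _ g i) nN.
Qed.

End Main.

Theorem theorem1p7 (k r : nat) (d : 'I_k -> nat) :
  (1 <= k)%N -> (2 <= r)%N ->
  (forall i, (0 < d i)%N) ->
  (forall i j : 'I_k, (i <= j)%N -> (d j <= d i)%N) ->
  (* upper bound for all sufficiently large n *)
  (exists N : nat, forall n : nat, (N <= n)%N ->
     (ex_lin r n (star_forest r d))%:R <= star_bound r n d)
  /\
  (* asymptotic sharpness: ex^lin >= bound - o(n) *)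
  (forall eps : rat, 0 < eps -> exists N : nat, forall n : nat, (N <= n)%N ->
     star_bound r n d - eps * n%:R <= (ex_lin r n (star_forest r d))%:R).
Proof.
case: k d => [//|k'] d _ r2 dpos dmon.
by split; [exact: (upper_part r2 dpos dmon) | exact: (lower_part r2 dpos dmon)].
Qed.
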